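(* Let $\mu>1$, $\gamma=\mu\gamma_1^N$, $\rho\in(0,1)$, $0<\alpha<1/4$, $\rho_k=4k^\alpha$. There exist constants $A_5<\infty$ and $\delta_0>0$ such that for all $N\ge3$, all $0<\delta<\delta_0$ and all $z\in\widehat C_\delta$, $$\Big|\widetilde G_N(z)-\Big(-\tfrac12z_0^2+\tfrac14z_0^4+\tfrac12\sum_{k=1}^{N-1}\lambda_{k,N}|z_k|^2+\tfrac32 z_0^2\sum_{k=1}^{N-1}|z_k|^2\Big)\Big|\le A_5\delta^3,$$ where $\widehat C_\delta=\{z\in\widehat{\mathbb{R}}^N: z_0\in(-1+\rho,1-\rho),\ |z_k|\le\delta r_{k,N}/\sqrt{\lambda_{k,N}}\ \text{for }1\le k\le N-1\}$.
   Context: Indices modulo $N$; $F_{\gamma,N}(x)=\sum_{i=0}^{N-1}(\tfrac14x_i^4-\tfrac12x_i^2)+\tfrac\gamma4\sum_{i=0}^{N-1}(x_i-x_{i+1})^2$; $\gamma_1^N=\frac1{2\sin^2(\pi/N)}$; $G_N=N^{-1}F_{\gamma,N}$; $\lambda_{k,N}=-1+2\gamma\sin^2(k\pi/N)$ (positive for $1\le k\le N-1$ when $\gamma>\gamma_1^N$). $\omega=e^{2\pi i/N}$; $\widehat{\mathbb{R}}^N=\{z\in\mathbb{C}^N:z_k=\overline{z_{N-k}}\}$; $x_j(Nz)=\sum_k\omega^{jk}z_k$; $\widetilde G_N(z)=G_N(x(Nz))$. $r_{k,N}=r_{N-k,N}=\rho_k$ for $1\le k\le\lfloor N/2\rfloor$.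 *)

(* Defs.v *)
From Stdlib Require Import Reals Lra Lia Arith.
Open Scope R_scope.

Fixpoint rsum (n : nat) (f : nat -> R) : R :=
  match n with
  | O => 0
  | S m => rsum m f + f m
  end.

Definition F_N (N : nat) (gamma : R) (x : nat -> R) : R :=
  rsum N (fun i => / 4 * x i ^ 4 - / 2 * x i ^ 2)
  + gamma / 4 * rsum N (fun i => (x i - x ((i + 1) mod N)%nat) ^ 2).

Definition G_N (N : nat) (gamma : R) (x : nat -> R) : R := / INR N * F_N N gamma x.

Definition gamma1 (N : nat) : R := / (2 * sin (PI / INR N) ^ 2).

Definition lambda (gamma : R) (k N : nat) : R :=
  -1 + 2 * gamma * sin (INR k * PI / INR N) ^ 2.

(* A complex vector z in C^N is represented by real parts a and imaginary
   parts b (only indices 0..N-1 matter).  z in \hat R^N: z_k = conj z_{N-k}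
   (indices mod N). *)
Definition in_hatR (N : nat) (a b : nat -> R) : Prop :=
  forall k : nat, (k < N)%nat ->
    a k = a ((N - k) mod N)%nat /\ b k = - b ((N - k) mod N)%nat.

Definition cmod (ak bk : R) : R := sqrt (ak ^ 2 + bk ^ 2).

(* x_j = sum_k omega^{jk} z_k, omega = exp(2 pi i / N); real part written out
   (the imaginary part vanishes for z in \hat R^N). *)
Definition xfour (N : nat) (a b : nat -> R) (j : nat) : R :=
  rsum N (fun k =>
    a k * cos (2 * PI * INR j * INR k / INR N)
    - b k * sin (2 * PI * INR j * INR k / INR N)).

Definition Gtilde (N : nat) (gamma : R) (a b : nat -> R) : R :=
  G_N N gamma (xfour N a b).

(* rho_k = 4 k^alpha, r_{k,N} = r_{N-k,N} = rho_k for 1 <= k <= floor(N/2) *)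
Definition rho_k (alpha : R) (k : nat) : R := 4 * Rpower (INR k) alpha.
Definition r_kN (alpha : R) (k N : nat) : R := rho_k alpha (Nat.min k (N - k)).

(* Main.v *)
Require Import Defs.
From Stdlib Require Import Reals Lra Lia Arith ZArith.
Open Scope R_scope.

Lemma rsum_S n f : rsum (S n) f = rsum n f + f n.
Proof. reflexivity. Qed.

Lemma rsum_ext n f g : (forall k, (k < n)%nat -> f k = g k) -> rsum n f = rsum n g.
Proof. induction n; intros H; simpl; auto. rewrite IHn by (intros; apply H; lia). rewrite H by lia. auto. Qed.

Lemma rsum_plus n f g : rsum n (fun k => f k + g k) = rsum n f + rsum n g.
Proof. induction n; simpl; [lra|]. rewrite IHn; ring. Qed.

Lemma rsum_minus n f g : rsum n (fun k => f k - g k) = rsum n f - rsum n g.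
Proof. induction n; simpl; [lra|]. rewrite IHn; ring. Qed.

Lemma rsum_scal n c f : rsum n (fun k => c * f k) = c * rsum n f.
Proof. induction n; simpl; [lra|]. rewrite IHn; ring. Qed.

Lemma rsum_zero n : rsum n (fun _ => 0) = 0.
Proof. induction n; simpl; [lra|]. rewrite IHn; ring. Qed.

Lemma rsum_le n f g : (forall k, (k < n)%nat -> f k <= g k) -> rsum n f <= rsum n g.
Proof. induction n; intros H; simpl; [lra|]. assert (H1 := H n ltac:(lia)).
 assert (rsum n f <= rsum n g) by (apply IHn; intros; apply H; lia). lra. Qed.

Lemma rsum_nonneg n f : (forall k, (k < n)%nat -> 0 <= f k) -> 0 <= rsum n f.
Proof. intros H. rewrite <- (rsum_zero n). apply rsum_le. auto. Qed.

Lemma rsum_abs n f : Rabs (rsum n f) <= rsum n (fun k => Rabs (f k)).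
Proof. induction n; simpl. rewrite Rabs_R0; lra.
 eapply Rle_trans. apply Rabs_triang. lra. Qed.

Lemma rsum_swap n m f : rsum n (fun i => rsum m (fun j => f i j)) = rsum m (fun j => rsum n (fun i => f i j)).
Proof. induction n; simpl. rewrite rsum_zero; auto.
 rewrite IHn, rsum_plus. auto. Qed.

Lemma rsum_mul n m f g : rsum n f * rsum m g = rsum n (fun i => rsum m (fun j => f i * g j)).
Proof. induction n; simpl; [ring|]. rewrite Rmult_plus_distr_r, IHn. f_equal.
 symmetry; apply rsum_scal. Qed.

Lemma rsum_pick n i f : (i < n)%nat -> rsum n (fun k => if Nat.eqb k i then f k else 0) = f i.
Proof. induction n; intros H; [lia|]. simpl.
 destruct (Nat.eq_dec i n) as [->|Hne].
 - rewrite Nat.eqb_refl. rewrite (rsum_ext _ _ (fun _ => 0)). rewrite rsum_zero; ring.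
   intros k Hk. destruct (Nat.eqb_spec k n); [lia|auto].
 - rewrite IHn by lia. destruct (Nat.eqb_spec n i); [lia|]. ring. Qed.

Lemma rsum_telescope n g : rsum n (fun j => g (S j) - g j) = g n - g O.
Proof. induction n; simpl; [ring|]. rewrite IHn; ring. Qed.

Lemma rsum_geom n x : rsum n (fun m => x ^ m) * (1 - x) = 1 - x ^ n.
Proof. induction n; simpl; [ring|]. rewrite Rmult_plus_distr_r, IHn. ring. Qed.

Lemma rsum_geom_le n x : 0 <= x < 1 -> rsum n (fun m => x ^ m) <= / (1 - x).
Proof. intros H. assert (E := rsum_geom n x). assert (0 <= x ^ n) by (apply pow_le; lra).
 apply (Rmult_le_reg_r (1 - x)); [lra|]. rewrite E, Rinv_l; lra. Qed.

Lemma rsum_count_lt n hi : rsum n (fun k => if Nat.ltb k hi then 1 else 0) = INR (Nat.min n hi).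
Proof. induction n; [simpl; auto|]. rewrite rsum_S, IHn. destruct (Nat.ltb_spec n hi).
 - replace (Nat.min (S n) hi) with (S (Nat.min n hi)) by lia. rewrite S_INR. ring.

 - replace (Nat.min (S n) hi) with (Nat.min n hi) by lia. ring. Qed.

Lemma rsum_count_int n lo hi : (lo <= hi)%nat ->
  rsum n (fun k => if andb (Nat.leb lo k) (Nat.ltb k hi) then 1 else 0) <= INR (hi - lo).
Proof. intros Hl.
 rewrite (rsum_ext _ _ (fun k => (if Nat.ltb k hi then 1 else 0) - (if Nat.ltb k lo then 1 else 0))).
 - rewrite rsum_minus, !rsum_count_lt.
   rewrite <- minus_INR by lia. apply le_INR. lia.
 - intros k _. destruct (Nat.leb_spec lo k), (Nat.ltb_spec k hi), (Nat.ltb_spec k lo); simpl; try lra; lia. Qed.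

Lemma wcs n (w y : nat -> R) : (forall k, (k < n)%nat -> 0 < w k) ->
  (rsum n y) ^ 2 <= rsum n (fun k => / w k) * rsum n (fun k => w k * y k ^ 2).
Proof. induction n; intros Hw; [simpl; lra|]. rewrite !rsum_S.
 assert (IH := IHn ltac:(intros; apply Hw; lia)).
 set (Sm := rsum n y) in *. set (A := rsum n (fun k => / w k)) in *.
 set (B := rsum n (fun k => w k * y k ^ 2)) in *.
 assert (HA : 0 <= A) by (apply rsum_nonneg; intros; left; apply Rinv_0_lt_compat, Hw; lia).
 assert (HB : 0 <= B) by (apply rsum_nonneg; intros; apply Rmult_le_pos; [left; apply Hw; lia| apply pow2_ge_0]).
 assert (Hwn := Hw n ltac:(lia)). set (v := w n) in *. set (t := y n).
 assert (2 * Sm * t <= A * v * t^2 + B / v).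
 { destruct (Req_dec A 0) as [HA0|HA0].
   - assert (Sm = 0) by (rewrite HA0 in IH; nra). subst. rewrite H. 
     assert (0 <= B / v) by (unfold Rdiv; apply Rmult_le_pos; [lra|left; apply Rinv_0_lt_compat; lra]). nra.
   - assert (A > 0) by lra.
     assert (Hsq : 0 <= (A * v * t - Sm)^2) by apply pow2_ge_0.
     assert (2 * A * v * (Sm * t) <= A^2 * v^2 * t^2 + A * B) by nra.
     apply (Rmult_le_reg_l (A * v)); [nra|].
     replace (A * v * (A * v * t ^ 2 + B / v)) with (A^2 * v^2 * t^2 + A * B) by (field; lra). nra. }
 assert (0 < /v) by (apply Rinv_0_lt_compat; lra).
 replace ((A + / v) * (B + v * t ^ 2)) with (A * B + A * v * t^2 + B / v + t^2) by (field; lra).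
 replace ((Sm + t)^2) with (Sm^2 + 2*Sm*t + t^2) by ring. lra. Qed.

Definition th (N j k : nat) : R := 2 * PI * INR j * INR k / INR N.

Lemma rsum_const n c : rsum n (fun _ => c) = INR n * c.
Proof. induction n; [simpl; ring|]. rewrite rsum_S, IHn, S_INR. ring. Qed.

Lemma sin_half_nz N m : (0 < N)%nat -> (m mod N <> 0)%nat -> sin (PI * INR m / INR N) <> 0.
Proof. intros HN Hm Hs. apply sin_eq_0_0 in Hs. destruct Hs as [k Hk].
 assert (HNr : INR N <> 0) by (apply not_0_INR; lia).
 assert (E : INR m = IZR k * INR N).
 { apply (Rmult_eq_reg_l PI); [| apply PI_neq0].
   replace (PI * INR m) with (PI * INR m / INR N * INR N) by (field; auto). rewrite Hk. ring. }
 rewrite !INR_IZR_INZ, <- mult_IZR in E. apply eq_IZR in E.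
 assert (0 <= k)%Z by nia.
 assert (m = Z.to_nat k * N)%nat by lia. subst m. rewrite Nat.Div0.mod_mul in Hm. lia. Qed.

Lemma th_mult N j q : (0 < N)%nat -> th N j (N * q) = 2 * INR (j * q) * PI.
Proof. intros HN. unfold th. rewrite !mult_INR. field. apply not_0_INR; lia. Qed.

Lemma cos_sum N m : (0 < N)%nat ->
  rsum N (fun j => cos (th N j m)) = if Nat.eqb (m mod N) 0 then INR N else 0.
Proof. intros HN. assert (HNr : INR N <> 0) by (apply not_0_INR; lia).
 destruct (Nat.eqb_spec (m mod N) 0) as [H0|H0].
 - rewrite (Nat.Div0.div_mod m N), H0, Nat.add_0_r.
   rewrite (rsum_ext _ _ (fun _ => 1)). rewrite rsum_const; ring.
   intros j _. rewrite th_mult by lia. rewrite <- (Rplus_0_l (2 * _ * PI)), cos_period. apply cos_0.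
 - set (p := 2 * PI * INR m / INR N).
   assert (Hs : sin (p / 2) <> 0).
   { replace (p/2) with (PI * INR m / INR N) by (unfold p; field; auto). apply sin_half_nz; auto. }
   apply (Rmult_eq_reg_l (2 * sin (p/2))); [|lra].
   rewrite Rmult_0_r, <- rsum_scal.
   rewrite (rsum_ext _ _ (fun j => sin (INR (S j) * p - p/2) - sin (INR j * p - p/2))).
   + rewrite (rsum_telescope N (fun j => sin (INR j * p - p / 2))). simpl INR.
     replace (INR N * p - p / 2) with (- (p/2) + 2 * INR m * PI) by (unfold p; field; auto).
     rewrite sin_period. replace (0 * p - p/2) with (- (p/2)) by ring. ring.
   + intros j _. rewrite S_INR. assert (E: (INR j + 1) * p - p / 2 = INR j * p + p/2) by lra. rewrite E.
     rewrite sin_plus, sin_minus. replace (th N j m) with (INR j * p) by (unfold th, p; field; auto). ring.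
Qed.

Lemma sin_sum N m : (0 < N)%nat -> rsum N (fun j => sin (th N j m)) = 0.
Proof. intros HN. assert (HNr : INR N <> 0) by (apply not_0_INR; lia).
 destruct (Nat.eqb_spec (m mod N) 0) as [H0|H0].
 - rewrite (Nat.Div0.div_mod m N), H0, Nat.add_0_r.
   rewrite (rsum_ext _ _ (fun _ => 0)). apply rsum_zero.
   intros j _. rewrite th_mult by lia. rewrite <- (Rplus_0_l (2 * _ * PI)), sin_period. apply sin_0.
 - set (p := 2 * PI * INR m / INR N).
   assert (Hs : sin (p / 2) <> 0).
   { replace (p/2) with (PI * INR m / INR N) by (unfold p; field; auto). apply sin_half_nz; auto. }
   apply (Rmult_eq_reg_l (2 * sin (p/2))); [|lra].
   rewrite Rmult_0_r, <- rsum_scal.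
   rewrite (rsum_ext _ _ (fun j => (-1) * (cos (INR (S j) * p - p/2) - cos (INR j * p - p/2)))).
   + rewrite rsum_scal, (rsum_telescope N (fun j => cos (INR j * p - p / 2))). simpl INR.
     replace (INR N * p - p / 2) with (- (p/2) + 2 * INR m * PI) by (unfold p; field; auto).
     rewrite cos_period. replace (0 * p - p/2) with (- (p/2)) by ring. ring.
   + intros j _. rewrite S_INR. replace ((INR j + 1) * p - p / 2) with (INR j * p + p/2) by lra.
     rewrite cos_plus, cos_minus. replace (th N j m) with (INR j * p) by (unfold th, p; field; auto). ring.
Qed.

Lemma th_diff N j k l : (l <= k)%nat -> th N j k - th N j l = th N j (k - l).
Proof. intros H. unfold th. rewrite minus_INR by auto. unfold Rdiv. ring. Qed.

Lemma th_add N j k l : th N j (k + l) = th N j k + th N j l.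
Proof. unfold th. rewrite plus_INR. unfold Rdiv. ring. Qed.

Lemma mod_eq0_small k N : (0 < N)%nat -> (k < N)%nat -> (k mod N =? 0)%nat = (k =? 0)%nat.
Proof. intros. rewrite Nat.mod_small; auto. Qed.

Lemma cosd_sum N k l : (k < N)%nat -> (l < N)%nat ->
  rsum N (fun j => cos (th N j k - th N j l)) = if Nat.eqb k l then INR N else 0.
Proof. intros Hk Hl. destruct (le_lt_dec l k).
 - rewrite (rsum_ext _ _ (fun j => cos (th N j (k - l)))) by (intros; rewrite th_diff; auto).
   rewrite cos_sum by lia. rewrite mod_eq0_small by lia.
   destruct (Nat.eqb_spec (k - l) 0), (Nat.eqb_spec k l); auto; lia.
 - rewrite (rsum_ext _ _ (fun j => cos (th N j (l - k)))).
   + rewrite cos_sum by lia. rewrite mod_eq0_small by lia.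
     destruct (Nat.eqb_spec (l - k) 0), (Nat.eqb_spec k l); auto; lia.
   + intros j _. rewrite <- th_diff by lia. rewrite <- cos_neg. f_equal. ring. Qed.

Lemma sind_sum N k l : (k < N)%nat -> (l < N)%nat ->
  rsum N (fun j => sin (th N j k - th N j l)) = 0.
Proof. intros Hk Hl. destruct (le_lt_dec l k).
 - rewrite (rsum_ext _ _ (fun j => sin (th N j (k - l)))) by (intros; rewrite th_diff; auto).
   apply sin_sum; lia.
 - rewrite (rsum_ext _ _ (fun j => (-1) * sin (th N j (l - k)))).
   + rewrite rsum_scal, sin_sum by lia. ring.
   + intros j _. rewrite <- th_diff by lia. replace (th N j k - th N j l) with (- (th N j l - th N j k)) by ring.
     rewrite sin_neg. ring. Qed.

Lemma mod_2N n N : (0 < N)%nat -> (n < 2 * N)%nat -> n mod N = if (n <? N)%nat then n else (n - N)%nat.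
Proof. intros HN Hn. destruct (Nat.ltb_spec n N). apply Nat.mod_small; auto.
 replace n with ((n - N) + 1 * N)%nat at 1 by lia. rewrite Nat.Div0.mod_add. apply Nat.mod_small. lia. Qed.

Lemma modsum N k l : (k < N)%nat -> (l < N)%nat -> ((k + l) mod N =? 0)%nat = (l =? (N - k) mod N)%nat.
Proof. intros Hk Hl. rewrite (mod_2N (k + l)) by lia. rewrite (mod_2N (N - k)) by lia.
 destruct (Nat.ltb_spec (k + l) N), (Nat.ltb_spec (N - k) N);
 destruct (Nat.eqb_spec (k + l) 0), (Nat.eqb_spec (k + l - N) 0), (Nat.eqb_spec l (N - k)), (Nat.eqb_spec l (N - k - N)); auto; lia. Qed.

Lemma rsum_lin4 n c1 c2 c3 c4 f1 f2 f3 f4 :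
  rsum n (fun j => c1 * f1 j + c2 * f2 j + c3 * f3 j + c4 * f4 j)
  = c1 * rsum n f1 + c2 * rsum n f2 + c3 * rsum n f3 + c4 * rsum n f4.
Proof. rewrite !rsum_plus, !rsum_scal. auto. Qed.

Definition tk N (a b : nat -> R) j k := a k * cos (th N j k) - b k * sin (th N j k).

Lemma xfour_eq N a b j : xfour N a b j = rsum N (fun k => tk N a b j k).
Proof. reflexivity. Qed.

Lemma prod_sum N a b k l : (k < N)%nat -> (l < N)%nat -> (0 < N)%nat ->
  rsum N (fun j => tk N a b j k * tk N a b j l) =
  INR N / 2 * ((if Nat.eqb k l then a k * a l + b k * b l else 0)
               + (if Nat.eqb ((k + l) mod N) 0 then a k * a l - b k * b l else 0)).
Proof. intros Hk Hl HN.
 rewrite (rsum_ext _ _ (fun j => ((a k * a l + b k * b l)/2) * cos (th N j k - th N j l)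
    + ((a k * a l - b k * b l)/2) * cos (th N j (k + l))
    + (- (a k * b l + b k * a l)/2) * sin (th N j (k + l))
    + ((a k * b l - b k * a l)/2) * sin (th N j k - th N j l))).
 - rewrite rsum_lin4, cosd_sum, sind_sum, cos_sum, sin_sum by lia.
   destruct (Nat.eqb k l), (Nat.eqb ((k+l) mod N) 0); field.
 - intros j _. unfold tk. rewrite th_add, cos_plus, cos_minus, sin_plus, sin_minus. field. Qed.

Lemma parseval N a b : (0 < N)%nat -> in_hatR N a b ->
  rsum N (fun j => xfour N a b j ^ 2) = INR N * rsum N (fun k => a k ^ 2 + b k ^ 2).
Proof. intros HN Hh.
 rewrite (rsum_ext _ _ (fun j => rsum N (fun k => rsum N (fun l => tk N a b j k * tk N a b j l)))).
 2:{ intros. rewrite xfour_eq, <- rsum_mul. simpl pow. rewrite Rmult_1_r. reflexivity. }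
 rewrite rsum_swap. rewrite <- rsum_scal. apply rsum_ext. intros k Hk.
 rewrite rsum_swap. rewrite (rsum_ext _ _ (fun l => INR N / 2 * ((if Nat.eqb l k then a k * a l + b k * b l else 0)
               + (if Nat.eqb l ((N - k) mod N) then a k * a l - b k * b l else 0)))).
 2:{ intros l Hl. rewrite prod_sum by lia. rewrite modsum by lia. rewrite Nat.eqb_sym. auto. }
 rewrite rsum_scal, rsum_plus, rsum_pick, rsum_pick by (try apply Nat.mod_upper_bound; lia).
 destruct (Hh k Hk) as [Ha Hb]. rewrite <- Ha. rewrite Hb. field. Qed.

Lemma mean_sum N a b : (0 < N)%nat -> rsum N (fun j => xfour N a b j) = INR N * a O.
Proof. intros HN. rewrite (rsum_ext _ _ (fun j => rsum N (fun k => tk N a b j k))) by (intros; apply xfour_eq).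
 rewrite rsum_swap. unfold tk.
 rewrite (rsum_ext _ _ (fun k => if Nat.eqb k 0 then INR N * a k else 0)).
 - rewrite rsum_pick by lia. auto.
 - intros k Hk. rewrite rsum_minus, rsum_scal, rsum_scal, cos_sum, sin_sum, mod_eq0_small by lia.
   destruct (Nat.eqb k 0); ring. Qed.

Definition a0f (a : nat -> R) k := if Nat.eqb k 0 then 0 else a k.

Lemma th_0k N k : th N 0 k = 0.
Proof. unfold th. simpl. unfold Rdiv. ring. Qed.
Lemma th_j0 N j : th N j 0 = 0.
Proof. unfold th. simpl. unfold Rdiv. ring. Qed.

Lemma hat_b0 N a b : (0 < N)%nat -> in_hatR N a b -> b O = 0.
Proof. intros HN H. destruct (H O HN) as [_ Hb]. rewrite Nat.sub_0_r, Nat.Div0.mod_same in Hb. lra. Qed.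

Lemma xfour_split N a b j : (0 < N)%nat -> xfour N a b j = a O + xfour N (a0f a) b j.
Proof. intros HN. rewrite !xfour_eq.
 rewrite (rsum_ext _ _ (fun k => (if Nat.eqb k 0 then a O else 0) + tk N (a0f a) b j k)).
 - rewrite rsum_plus, rsum_pick; auto.
 - intros k _. unfold tk, a0f. destruct (Nat.eqb_spec k 0). subst. rewrite th_j0, cos_0, sin_0. ring. ring. Qed.

Lemma hat_a0 N a b : (0 < N)%nat -> in_hatR N a b -> in_hatR N (a0f a) b.
Proof. intros HN H k Hk. destruct (H k Hk) as [Ha Hb]. split; auto. unfold a0f.
 destruct (Nat.eqb_spec k 0).
 - subst. rewrite Nat.sub_0_r, Nat.Div0.mod_same. auto.
 - rewrite Nat.mod_small by lia. destruct (Nat.eqb_spec (N - k) 0); [lia|]. rewrite Nat.mod_small in Ha by lia. auto. Qed.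

Lemma xfour_N N a b : (0 < N)%nat -> xfour N a b N = xfour N a b O.
Proof. intros HN. rewrite !xfour_eq. apply rsum_ext. intros k _. unfold tk. rewrite th_0k.
 replace (th N N k) with (0 + 2 * INR k * PI) by (unfold th; field; apply not_0_INR; lia).
 rewrite cos_period, sin_period. auto. Qed.

Lemma xfour_succ_mod N a b i : (0 < N)%nat -> (i < N)%nat -> xfour N a b ((i + 1) mod N) = xfour N a b (S i).
Proof. intros HN Hi. destruct (Nat.eq_dec (S i) N).
 - rewrite e. replace (i+1)%nat with N by lia. rewrite Nat.Div0.mod_same. symmetry. apply xfour_N; auto.
 - rewrite Nat.mod_small by lia. f_equal. lia. Qed.

Definition ad N (a b : nat -> R) k := a k * (1 - cos (th N 1 k)) + b k * sin (th N 1 k).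
Definition bd N (a b : nat -> R) k := b k * (1 - cos (th N 1 k)) - a k * sin (th N 1 k).

Lemma th_S N j k : th N (S j) k = th N j k + th N 1 k.
Proof. unfold th. rewrite S_INR. simpl. unfold Rdiv. ring. Qed.

Lemma xfour_diff N a b j : xfour N a b j - xfour N a b (S j) = xfour N (ad N a b) (bd N a b) j.
Proof. rewrite !xfour_eq, <- rsum_minus. apply rsum_ext. intros k _. unfold tk, ad, bd.
 rewrite th_S, cos_plus, sin_plus. ring. Qed.

Lemma th1_refl N k : (0 < N)%nat -> (k < N)%nat ->
  cos (th N 1 ((N - k) mod N)) = cos (th N 1 k) /\ sin (th N 1 ((N - k) mod N)) = - sin (th N 1 k).
Proof. intros HN Hk. destruct (Nat.eqb_spec k 0).
 - subst. rewrite Nat.sub_0_r, Nat.Div0.mod_same, th_j0, sin_0. split; auto; ring.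
 - rewrite Nat.mod_small by lia.
   replace (th N 1 (N - k)) with (2 * PI - th N 1 k).
   + rewrite cos_minus, sin_minus, cos_2PI, sin_2PI. split; ring.
   + unfold th. rewrite minus_INR by lia. simpl. field. apply not_0_INR; lia. Qed.

Lemma hat_d N a b : (0 < N)%nat -> in_hatR N a b -> in_hatR N (ad N a b) (bd N a b).
Proof. intros HN H k Hk. destruct (H k Hk) as [Ha Hb]. destruct (th1_refl N k HN Hk) as [Hc Hs].
 unfold ad, bd. rewrite Hc, Hs, <- Ha, Hb. split; ring. Qed.

Lemma d_norm N a b k : (0 < N)%nat ->
  ad N a b k ^ 2 + bd N a b k ^ 2 = (a k ^ 2 + b k ^ 2) * (4 * sin (INR k * PI / INR N) ^ 2).
Proof. intros HN. unfold ad, bd.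
 assert (E : th N 1 k = 2 * (INR k * PI / INR N)) by (unfold th; simpl; field; apply not_0_INR; lia).
 rewrite E, cos_2a_sin, sin_2a. assert (H := sin2_cos2 (INR k * PI / INR N)). unfold Rsqr in H.
 set (s := sin (INR k * PI / INR N)) in *. set (c := cos (INR k * PI / INR N)) in *.
 replace (a k * (1 - (1 - 2 * s * s)) + b k * (2 * s * c)) with (2 * s * (a k * s + b k * c)) by ring.
 replace (b k * (1 - (1 - 2 * s * s)) - a k * (2 * s * c)) with (2 * s * (b k * s - a k * c)) by ring.
 replace (4 * s^2) with (4 * s^2 * (s * s + c * c)) by (rewrite H; ring). ring. Qed.

Lemma cmod_sq x y : cmod x y ^ 2 = x ^ 2 + y ^ 2.
Proof. unfold cmod. apply pow2_sqrt. nra. Qed.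

Lemma main_identity N g a b : (0 < N)%nat -> in_hatR N a b ->
  Gtilde N g a b - (- / 2 * a O ^ 2 + / 4 * a O ^ 4
               + / 2 * rsum N (fun k => if Nat.eqb k 0 then 0
                     else lambda g k N * cmod (a k) (b k) ^ 2)
               + 3 / 2 * a O ^ 2 * rsum N (fun k => if Nat.eqb k 0 then 0
                     else cmod (a k) (b k) ^ 2))
  = / INR N * rsum N (fun j => a O * xfour N (a0f a) b j ^ 3 + / 4 * xfour N (a0f a) b j ^ 4).
Proof. intros HN Hh.
 assert (HNr : INR N <> 0) by (apply not_0_INR; lia).
 assert (Hb0 := hat_b0 N a b HN Hh). assert (Hh0 := hat_a0 N a b HN Hh).
 set (y := xfour N (a0f a) b). set (A := a O).
 set (Q := rsum N (fun k => a0f a k ^ 2 + b k ^ 2)).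
 set (Ss := rsum N (fun k => (a0f a k ^ 2 + b k ^ 2) * sin (INR k * PI / INR N) ^ 2)).
 assert (E1 : rsum N (fun k => if Nat.eqb k 0 then 0 else cmod (a k) (b k) ^ 2) = Q).
 { unfold Q. apply rsum_ext. intros k _. unfold a0f. rewrite cmod_sq. destruct (Nat.eqb_spec k 0).
   subst. rewrite Hb0. ring. auto. }
 assert (E2 : rsum N (fun k => if Nat.eqb k 0 then 0 else lambda g k N * cmod (a k) (b k) ^ 2) = - Q + 2 * g * Ss).
 { rewrite (rsum_ext _ _ (fun k => (-1) * (a0f a k ^ 2 + b k ^ 2) + (2 * g) * ((a0f a k ^ 2 + b k ^ 2) * sin (INR k * PI / INR N) ^ 2))).
   - rewrite rsum_plus, !rsum_scal. fold Q Ss. ring.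
   - intros k _. unfold a0f, lambda. rewrite cmod_sq. destruct (Nat.eqb_spec k 0).
     subst. rewrite Hb0. ring. ring. }
 assert (Sy : rsum N y = 0).
 { unfold y. rewrite mean_sum by auto. unfold a0f. simpl. ring. }
 assert (Sy2 : rsum N (fun j => y j ^ 2) = INR N * Q).
 { unfold y, Q. apply parseval; auto. }
 assert (P1 : rsum N (fun i => / 4 * xfour N a b i ^ 4 - / 2 * xfour N a b i ^ 2)
   = INR N * (/4 * A^4 - /2 * A^2) + (3/2 * A^2 - /2) * (INR N * Q)
     + rsum N (fun j => A * y j ^ 3 + / 4 * y j ^ 4)).
 { rewrite (rsum_ext _ _ (fun i => (/4 * A^4 - /2 * A^2) * 1 + (A^3 - A) * y i + (3/2 * A^2 - /2) * y i ^ 2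
      + 1 * (A * y i ^ 3 + / 4 * y i ^ 4))).
   - rewrite rsum_lin4, rsum_const, Sy, Sy2. ring.
   - intros i _. unfold y, A. rewrite (xfour_split N a b i HN). field. }
 assert (P2 : rsum N (fun i => (xfour N a b i - xfour N a b ((i + 1) mod N)) ^ 2) = INR N * (4 * Ss)).
 { rewrite (rsum_ext _ _ (fun i => xfour N (ad N (a0f a) b) (bd N (a0f a) b) i ^ 2)).
   - rewrite parseval by (auto; apply hat_d; auto). f_equal. unfold Ss. rewrite <- rsum_scal.
     apply rsum_ext. intros k _. rewrite d_norm by auto. ring.
   - intros i Hi. rewrite xfour_succ_mod by auto. rewrite !(xfour_split N a b) by auto.
     rewrite <- xfour_diff. f_equal. ring. }
 unfold Gtilde, G_N, F_N. rewrite P1, P2, E1, E2. fold A. field. auto. Qed.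

Lemma sin_lb_eq u : sin_lb u = u - u^3/6 + u^5/120 - u^7/5040.
Proof. unfold sin_lb, sin_approx, sin_term; simpl; field. Qed.
Lemma sin_lb3 : forall u, 0 <= u <= 2 -> u/3 <= sin u.
intros u Hu. assert (Hp := PI_4). assert (Hp2 := PI2_3_2).
assert (H:=SIN u ltac:(lra) ltac:(lra)). destruct H as [H _]. rewrite sin_lb_eq in H.
assert (u^5/120 - u^7/5040 >= 0). { assert (u^2 <= 4) by nra.
 assert (0 <= u^5) by (apply pow_le; lra).
 replace (u^7) with (u^5*u^2) by ring. nra. }
 nra.
Qed.

Lemma lam_lb mu N k : 1 < mu -> (3 <= N)%nat -> (1 <= k <= N - 1)%nat ->
  (mu - 1) / 9 * INR (Nat.min k (N - k)) ^ 2 <= lambda (mu * gamma1 N) k N.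
Proof. intros Hmu HN Hk.
 set (d := Nat.min k (N - k)).
 assert (HNr : 0 < INR N) by (apply lt_0_INR; lia).
 assert (Hd1 : (1 <= d)%nat) by (unfold d; lia). assert (Hd2 : (2 * d <= N)%nat) by (unfold d; lia).
 assert (Hdr1 : 1 <= INR d) by (apply (le_INR 1); auto).
 assert (Hdr2 : 2 * INR d <= INR N) by (rewrite <- (mult_INR 2); apply le_INR; auto).
 assert (HP := PI_RGT_0). assert (HP4 := PI_4).
 assert (Es : sin (INR k * PI / INR N) = sin (INR d * PI / INR N)).
 { unfold d. destruct (Nat.min_spec k (N - k)) as [[_ E]|[_ E]]; rewrite E; auto.
   rewrite minus_INR by lia. replace ((INR N - INR k) * PI / INR N) with (PI - INR k * PI / INR N) by (field; lra).
   rewrite sin_PI_x. auto. }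
 set (u := INR d * PI / INR N). set (v := PI / INR N).
 assert (Hv : 0 < v) by (unfold v; apply Rdiv_lt_0_compat; lra).
 assert (Hvu : v <= u) by (unfold u, v; unfold Rdiv; rewrite <- (Rmult_1_l (PI * / INR N)) at 1;
   rewrite Rmult_assoc; apply Rmult_le_compat_r; [apply Rmult_le_pos; [lra| left; apply Rinv_0_lt_compat; lra]|lra]).
 assert (Hu2 : u <= PI / 2).
 { unfold u. apply (Rmult_le_reg_r (2 * INR N)); [lra|]. replace (INR d * PI / INR N * (2 * INR N)) with (2 * INR d * PI) by (field; lra).
   replace (PI / 2 * (2 * INR N)) with (INR N * PI) by field. nra. }
 assert (Hs1 : 0 < sin v) by (apply sin_gt_0; lra).
 assert (Hs1v : sin v < v) by (apply sin_lt_x; lra).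
 assert (Hsu : sin v <= sin u) by (apply sin_incr_1; lra).
 assert (Hsu3 : u / 3 <= sin u) by (apply sin_lb3; lra).
 assert (Huv : u = INR d * v) by (unfold u, v; field; lra).
 assert (INR d * sin v <= INR d * v) by (apply Rmult_le_compat_l; lra).
 assert (INR d * v / 3 <= sin u) by (rewrite <- Huv; auto).
 assert (H3 : INR d * sin v <= 3 * sin u) by lra.
 assert (Hg : 2 * (mu * gamma1 N) = mu / sin v ^ 2).
 { unfold gamma1. fold v. field. lra. }
 unfold lambda. rewrite Es. fold u.
 replace (-1 + 2 * (mu * gamma1 N) * sin u ^ 2) with (-1 + 2 * (mu * gamma1 N) * sin u ^ 2) by ring.
 rewrite Hg.
 apply (Rmult_le_reg_r (sin v ^ 2)); [nra|].
 replace ((-1 + mu / sin v ^ 2 * sin u ^ 2) * sin v ^ 2) with (mu * sin u ^ 2 - sin v ^ 2) by (field; lra).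
 assert (0 <= INR d * sin v) by (apply Rmult_le_pos; lra).
 assert (INR d ^ 2 * sin v ^ 2 <= 9 * sin u ^ 2) by (assert (0 <= (3 * sin u - INR d * sin v) * (3 * sin u + INR d * sin v)) by (apply Rmult_le_pos; lra); nra).
 assert (sin v ^ 2 <= sin u ^ 2) by nra.
 nra. Qed.

Lemma Rpower_pos x y : 0 < Rpower x y.
Proof. unfold Rpower. apply exp_pos. Qed.

Lemma Rpower_2pow n al : Rpower (2 ^ n) al = Rpower 2 al ^ n.
Proof. rewrite <- (Rpower_pow n 2) by lra. rewrite Rpower_mult.
 rewrite <- (Rpower_pow n (Rpower 2 al)) by apply Rpower_pos. rewrite Rpower_mult. f_equal. ring. Qed.

Lemma z_bound mu alpha N k delta m x : 1 < mu -> 0 < alpha -> (3 <= N)%nat -> (1 <= k <= N - 1)%nat -> 0 < delta ->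
  (2 ^ m <= Nat.min k (N - k) < 2 ^ S m)%nat ->
  x <= delta * r_kN alpha k N / sqrt (lambda (mu * gamma1 N) k N) ->
  x <= 12 / sqrt (mu - 1) * delta * Rpower 2 alpha ^ S m / 2 ^ m.
Proof. intros Hmu Hal HN Hk Hd Hm Hx.
 set (d := Nat.min k (N - k)) in *.
 assert (HL := lam_lb mu N k Hmu HN Hk). fold d in HL.
 assert (Hdm : 2 ^ m <= INR d) by (rewrite <- (pow_INR 2); apply le_INR; lia).
 assert (Hdm2 : INR d < 2 ^ S m) by (rewrite <- (pow_INR 2); apply lt_INR; lia).
 assert (H2m : 0 < 2 ^ m) by (apply pow_lt; lra).
 assert (Hs : 0 < sqrt (mu - 1)) by (apply sqrt_lt_R0; lra).
 assert (Hsl : sqrt (mu - 1) * INR d / 3 <= sqrt (lambda (mu * gamma1 N) k N)).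
 { rewrite <- (sqrt_pow2 (sqrt (mu - 1) * INR d / 3)) by (apply Rmult_le_pos; [apply Rmult_le_pos|]; lra).
   apply sqrt_le_1_alt. replace ((sqrt (mu - 1) * INR d / 3) ^ 2) with ((sqrt (mu - 1))^2 * INR d ^ 2 / 9) by field.
   rewrite pow2_sqrt by lra. lra. }
 assert (Hr : r_kN alpha k N <= 4 * Rpower 2 alpha ^ S m).
 { unfold r_kN, rho_k. fold d. rewrite <- Rpower_2pow. apply Rmult_le_compat_l; [lra|].
   apply Rle_Rpower_l; lra. }
 assert (HP := Rpower_pos 2 alpha). assert (0 < Rpower 2 alpha ^ S m) by (apply pow_lt; lra).
 assert (0 <= r_kN alpha k N) by (unfold r_kN, rho_k; left; apply Rmult_lt_0_compat; [lra| apply Rpower_pos]).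
 eapply Rle_trans; [apply Hx|].
 assert (0 < sqrt (mu - 1) * INR d / 3) by (apply Rdiv_lt_0_compat; [apply Rmult_lt_0_compat|]; lra).
 apply Rle_trans with (delta * (4 * Rpower 2 alpha ^ S m) / (sqrt (mu - 1) * INR d / 3)).
 - unfold Rdiv. apply Rmult_le_compat.
   + apply Rmult_le_pos; lra.
   + left; apply Rinv_0_lt_compat; lra.
   + apply Rmult_le_compat_l; lra.
   + apply Rinv_le_contravar; lra.
 - replace (delta * (4 * Rpower 2 alpha ^ S m) / (sqrt (mu - 1) * INR d / 3)) with
     (12 / sqrt (mu - 1) * delta * Rpower 2 alpha ^ S m / INR d) by (field; lra).
   unfold Rdiv. apply Rmult_le_compat_l.
   + apply Rmult_le_pos; [|lra]. apply Rmult_le_pos; [|lra]. left; apply Rmult_lt_0_compat; [lra|apply Rinv_0_lt_compat; lra].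
   + apply Rinv_le_contravar; lra. Qed.

Definition dmin N k := Nat.min k (N - k).
Definition pre N k : bool := andb (Nat.leb 1 k) (Nat.leb k (N - 1)).
Definition cnd N m k : bool := andb (pre N k) (Nat.eqb (Nat.log2 (dmin N k)) m).
Definition am N (a : nat -> R) m k := if cnd N m k then a k else 0.

Lemma cnd_spec N m k : cnd N m k = true ->
  (1 <= k <= N - 1)%nat /\ (2 ^ m <= dmin N k < 2 ^ S m)%nat.
Proof. unfold cnd, pre. intros H. apply andb_prop in H. destruct H as [H1 H2].
 apply andb_prop in H1. destruct H1 as [H1 H3]. apply Nat.leb_le in H1. apply Nat.leb_le in H3.
 apply Nat.eqb_eq in H2. split; [lia|]. subst m. apply Nat.log2_spec. unfold dmin. lia. Qed.

Lemma cnd_refl N m k : (0 < N)%nat -> (k < N)%nat -> cnd N m ((N - k) mod N) = cnd N m k.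
Proof. intros HN Hk. destruct (Nat.eqb_spec k 0).
 - subst. rewrite Nat.sub_0_r, Nat.Div0.mod_same. auto.
 - rewrite Nat.mod_small by lia. unfold cnd, pre, dmin.
   replace (Nat.min (N - k) (N - (N - k))) with (Nat.min k (N - k)) by lia.
   f_equal. destruct (Nat.leb_spec 1 (N - k)), (Nat.leb_spec (N - k) (N - 1)),
     (Nat.leb_spec 1 k), (Nat.leb_spec k (N - 1)); auto; lia. Qed.

Lemma hat_m N a b m : (0 < N)%nat -> in_hatR N a b -> in_hatR N (am N a m) (am N b m).
Proof. intros HN H k Hk. destruct (H k Hk) as [Ha Hb]. unfold am. rewrite cnd_refl by auto.
 destruct (cnd N m k); split; auto; ring. Qed.

Lemma decomp N a b j : (0 < N)%nat -> in_hatR N a b ->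
  xfour N (a0f a) b j = rsum N (fun m => xfour N (am N a m) (am N b m) j).
Proof. intros HN Hh. assert (Hb0 := hat_b0 N a b HN Hh).
 rewrite xfour_eq. rewrite (rsum_ext N (fun m => xfour _ _ _ j) (fun m => rsum N (fun k => tk N (am N a m) (am N b m) j k)))
   by (intros; apply xfour_eq).
 rewrite rsum_swap. apply rsum_ext. intros k Hk.
 destruct (pre N k) eqn:Hp.
 - rewrite (rsum_ext _ _ (fun m => if Nat.eqb m (Nat.log2 (dmin N k)) then tk N (a0f a) b j k else 0)).
   + rewrite rsum_pick; auto. unfold pre in Hp. apply andb_prop in Hp. destruct Hp as [H1 H2].
     apply Nat.leb_le in H1. apply Nat.leb_le in H2.
     assert (Hl := Nat.log2_lt_lin (dmin N k) ltac:(unfold dmin; lia)). unfold dmin in *. lia.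
   + intros m _. unfold tk, am, cnd, a0f. rewrite Hp. simpl.
     destruct (Nat.eqb_spec (Nat.log2 (dmin N k)) m), (Nat.eqb_spec m (Nat.log2 (dmin N k))); try lia; [|ring].
     unfold pre in Hp. apply andb_prop in Hp. destruct Hp as [H1 _].
     apply Nat.leb_le in H1. destruct (Nat.eqb_spec k 0); [lia|]. auto.
 - rewrite (rsum_ext _ _ (fun _ => 0)). rewrite rsum_zero. unfold tk, a0f.
   + unfold pre in Hp. destruct (Nat.eqb_spec k 0).
     * subst. rewrite Hb0. ring.
     * destruct (Nat.leb_spec 1 k), (Nat.leb_spec k (N - 1)); simpl in Hp; try discriminate; lia.
   + intros m _. unfold tk, am, cnd. rewrite Hp. simpl. ring. Qed.

Lemma count_blk N m : rsum N (fun k => if cnd N m k then 1 else 0) <= 2 * 2 ^ m.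
Proof. set (p := (2 ^ m)%nat).
 apply Rle_trans with (rsum N (fun k => (if andb (Nat.leb p k) (Nat.ltb k (2 * p)) then 1 else 0)
   + (if andb (Nat.leb (N + 1 - 2 * p) k) (Nat.ltb k (N + 1 - p)) then 1 else 0))).
 - apply rsum_le. intros k Hk. destruct (cnd N m k) eqn:Hc.
   + apply cnd_spec in Hc. destruct Hc as [H1 H2]. unfold dmin in H2. fold p in H2.
     rewrite Nat.pow_succ_r in H2 by lia. fold p in H2.
     destruct (Nat.leb_spec p k), (Nat.ltb_spec k (2 * p)), (Nat.leb_spec (N + 1 - 2 * p) k), (Nat.ltb_spec k (N + 1 - p)); simpl; lra || lia.
   + destruct (andb _ _), (andb _ _); lra.
 - rewrite rsum_plus. assert (H1 := rsum_count_int N p (2 * p) ltac:(lia)).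
   assert (H2 := rsum_count_int N (N + 1 - 2 * p) (N + 1 - p) ltac:(lia)).
   assert (INR (2 * p - p) <= INR p) by (apply le_INR; lia).
   assert (INR (N + 1 - p - (N + 1 - 2 * p)) <= INR p) by (apply le_INR; lia).
   assert (INR p = 2 ^ m) by (unfold p; rewrite pow_INR; auto). lra. Qed.

Lemma tk_abs N a b j k : Rabs (tk N a b j k) <= cmod (a k) (b k).
Proof. unfold tk, cmod. assert (H := sin2_cos2 (th N j k)). unfold Rsqr in H.
 set (c := cos (th N j k)) in *. set (s := sin (th N j k)) in *.
 rewrite <- sqrt_Rsqr_abs. apply sqrt_le_1_alt. unfold Rsqr.
 assert (0 <= (a k * s + b k * c) ^ 2) by apply pow2_ge_0.
 replace (a k ^ 2 + b k ^ 2) with ((a k ^ 2 + b k ^ 2) * (s * s + c * c)) by (rewrite H; ring).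
 nra. Qed.

Lemma cmod_nonneg x y : 0 <= cmod x y.
Proof. apply sqrt_pos. Qed.

Lemma blk_bounds N a b m B : (0 < N)%nat -> in_hatR N a b -> 0 <= B ->
  (forall k, (k < N)%nat -> cnd N m k = true -> cmod (a k) (b k) <= B) ->
  (forall j, Rabs (xfour N (am N a m) (am N b m) j) <= 2 * 2 ^ m * B) /\
  rsum N (fun j => xfour N (am N a m) (am N b m) j ^ 2) <= INR N * (2 * 2 ^ m * B ^ 2).
Proof. intros HN Hh HB Hz. split.
 - intros j. rewrite xfour_eq. eapply Rle_trans. apply rsum_abs.
   apply Rle_trans with (rsum N (fun k => B * (if cnd N m k then 1 else 0))).
   + apply rsum_le. intros k Hk. eapply Rle_trans. apply tk_abs. unfold am. destruct (cnd N m k) eqn:E.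
     * rewrite Rmult_1_r. apply Hz; auto.
     * unfold cmod. replace (0 ^ 2 + 0 ^ 2) with 0 by ring. rewrite sqrt_0. lra.
   + rewrite rsum_scal. rewrite Rmult_comm. apply Rmult_le_compat_r; auto. apply count_blk.
 - rewrite parseval by (auto; apply hat_m; auto). apply Rmult_le_compat_l; [apply pos_INR|].
   apply Rle_trans with (rsum N (fun k => B ^ 2 * (if cnd N m k then 1 else 0))).
   + apply rsum_le. intros k Hk. unfold am. destruct (cnd N m k) eqn:E.
     * rewrite Rmult_1_r. rewrite <- cmod_sq. assert (Hc := Hz k Hk E). assert (Hc0 := cmod_nonneg (a k) (b k)). nra.
     * lra.
   + rewrite rsum_scal. assert (Hc := count_blk N m). assert (0 <= B ^ 2) by apply pow2_ge_0.
     assert (B ^ 2 * rsum N (fun k => if cnd N m k then 1 else 0) <= B ^ 2 * (2 * 2 ^ m)) by (apply Rmult_le_compat_l; auto).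
     lra. Qed.

Lemma sum4_le n (f : nat -> R) M : (forall j, (j < n)%nat -> Rabs (f j) <= M) ->
  rsum n (fun j => f j ^ 4) <= M ^ 2 * rsum n (fun j => f j ^ 2).
Proof. intros H. rewrite <- rsum_scal. apply rsum_le. intros j Hj. assert (Hf := H j Hj).
 assert (f j ^ 2 <= M ^ 2).
 { rewrite <- (pow2_abs (f j)). apply pow_incr. split; auto. apply Rabs_pos. }
 replace (f j ^ 4) with (f j ^ 2 * f j ^ 2) by ring. apply Rmult_le_compat_r; auto. apply pow2_ge_0. Qed.

Lemma combine_pt n (Y : nat -> R) rho : 0 < rho < 1 ->
  (rsum n Y) ^ 4 <= (/ (1 - rho)) ^ 3 * rsum n (fun m => (/ rho ^ m) ^ 3 * Y m ^ 4).
Proof. intros Hr. set (w := fun m : nat => / rho ^ m).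
 assert (Hw : forall m, (m < n)%nat -> 0 < w m) by (intros; unfold w; apply Rinv_0_lt_compat, pow_lt; lra).
 assert (Hiw : forall m, / w m = rho ^ m) by (intros; unfold w; rewrite Rinv_inv; auto).
 set (W := rsum n (fun m => / w m)).
 assert (HW : W <= / (1 - rho)) by (unfold W; rewrite (rsum_ext _ _ (fun m => rho ^ m)) by auto; apply rsum_geom_le; lra).
 assert (HW0 : 0 <= W) by (apply rsum_nonneg; intros; left; apply Rinv_0_lt_compat; auto).
 assert (C1 := wcs n w Y Hw). fold W in C1.
 assert (C2 := wcs n w (fun m => w m * Y m ^ 2) Hw). fold W in C2.
 set (S2 := rsum n (fun k => w k * Y k ^ 2)) in *.
 set (S4 := rsum n (fun k => w k * (w k * Y k ^ 2) ^ 2)) in *.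
 assert (HS4 : 0 <= S4) by (apply rsum_nonneg; intros; apply Rmult_le_pos; [left; auto| apply pow2_ge_0]).
 assert (HS2 : 0 <= S2) by (apply rsum_nonneg; intros; apply Rmult_le_pos; [left; auto| apply pow2_ge_0]).
 assert (E4 : rsum n (fun m => (/ rho ^ m) ^ 3 * Y m ^ 4) = S4) by (unfold S4, w; apply rsum_ext; intros; ring).
 rewrite E4.
 assert (H1 : (rsum n Y) ^ 4 <= W ^ 2 * S2 ^ 2).
 { replace ((rsum n Y) ^ 4) with (((rsum n Y) ^ 2) ^ 2) by ring.
   replace (W ^ 2 * S2 ^ 2) with ((W * S2) ^ 2) by ring.
   apply pow_incr; split; [apply pow2_ge_0 | auto]. }
 assert (H2 : W ^ 2 * S2 ^ 2 <= W ^ 3 * S4).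
 { replace (W ^ 3 * S4) with (W ^ 2 * (W * S4)) by ring. apply Rmult_le_compat_l; auto. apply pow2_ge_0. }
 assert (H3 : W ^ 3 <= (/ (1 - rho)) ^ 3) by (apply pow_incr; auto).
 assert (W ^ 3 * S4 <= (/ (1 - rho)) ^ 3 * S4) by (apply Rmult_le_compat_r; auto).
 lra. Qed.

Lemma pow_q m rho q : 0 < rho -> (/ rho ^ m) ^ 3 * q ^ m = (q / rho ^ 3) ^ m.
Proof. intros H. unfold Rdiv. rewrite Rpow_mult_distr, pow_inv, pow_inv, <- !pow_mult, Nat.mul_comm.
 field. apply pow_nonzero; lra. Qed.

Lemma P4_lt alpha : alpha < / 4 -> Rpower 2 alpha ^ 4 < 2.
Proof. intros H. rewrite <- Rpower_pow by apply Rpower_pos. rewrite Rpower_mult.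
 rewrite <- (Rpower_1 2) at 2 by lra. apply Rpower_lt; [lra|]. simpl. lra. Qed.

Lemma blk_id C1 delta P m : (2 * 2 ^ m * (C1 * delta * P ^ S m / 2 ^ m)) ^ 2 * (2 * 2 ^ m * (C1 * delta * P ^ S m / 2 ^ m) ^ 2)
  = 8 * C1 ^ 4 * delta ^ 4 * P ^ 4 * (P ^ 4 / 2) ^ m.
Proof. replace ((P ^ 4 / 2) ^ m) with ((P ^ m) ^ 4 / 2 ^ m).
 - assert (2 ^ m <> 0) by (apply pow_nonzero; lra). simpl pow. field. auto.
 - unfold Rdiv. rewrite Rpow_mult_distr, pow_inv, <- !pow_mult, Nat.mul_comm. auto. Qed.

Lemma E4_bound mu alpha : 1 < mu -> 0 < alpha < / 4 ->
  exists K4, 0 <= K4 /\ forall N delta a b, (3 <= N)%nat -> 0 < delta -> in_hatR N a b ->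
      (forall k : nat, (1 <= k <= N - 1)%nat ->
         cmod (a k) (b k) <= delta * r_kN alpha k N / sqrt (lambda (mu * gamma1 N) k N)) ->
      rsum N (fun j => xfour N (a0f a) b j ^ 4) <= INR N * K4 * delta ^ 4.
Proof. intros Hmu Hal.
 set (P := Rpower 2 alpha). set (q := P ^ 4 / 2). set (rho := 1 - (1 - q) / 4).
 set (r := q / rho ^ 3). set (C1 := 12 / sqrt (mu - 1)).
 assert (HP : 0 < P) by apply Rpower_pos.
 assert (Hq1 : q < 1) by (unfold q; assert (H := P4_lt alpha ltac:(lra)); fold P in H; lra).
 assert (Hq0 : 0 < q) by (unfold q; assert (0 < P ^ 4) by (apply pow_lt; lra); lra).
 assert (Hrho : 0 < rho < 1) by (unfold rho; lra).
 assert (Hrho3 : (1 + 3 * q) / 4 <= rho ^ 3).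
 { unfold rho. set (e := (1 - q) / 4). assert (0 < e < 1/4) by (unfold e; lra).
   assert (0 <= e ^ 2 * (3 - e)) by (apply Rmult_le_pos; [apply pow2_ge_0|lra]).
   replace ((1 + 3 * q) / 4) with (1 - 3 * e) by (unfold e; field). 
   replace ((1 - e) ^ 3) with (1 - 3 * e + e ^ 2 * (3 - e)) by ring. lra. }
 assert (Hr : 0 <= r < 1).
 { unfold r. assert (0 < rho ^ 3) by (apply pow_lt; lra). split.
   - unfold Rdiv; apply Rmult_le_pos; [lra| left; apply Rinv_0_lt_compat; auto].
   - apply (Rmult_lt_reg_r (rho ^ 3)); auto. unfold Rdiv. rewrite Rmult_assoc, Rinv_l by lra. lra. }
 exists ((/ (1 - rho)) ^ 3 * (8 * C1 ^ 4 * P ^ 4) * / (1 - r)).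
 assert (HC1 : 0 < C1) by (unfold C1; apply Rdiv_lt_0_compat; [lra| apply sqrt_lt_R0; lra]).
 assert (Hi1 : 0 < / (1 - rho)) by (apply Rinv_0_lt_compat; lra).
 assert (Hi2 : 0 < / (1 - r)) by (apply Rinv_0_lt_compat; lra).
 assert (HK : 0 <= 8 * C1 ^ 4 * P ^ 4) by (assert (0 < C1 ^ 4) by (apply pow_lt; lra); assert (0 < P ^ 4) by (apply pow_lt; lra); nra).
 split.
 { apply Rmult_le_pos; [apply Rmult_le_pos|]; try lra. apply pow_le; lra. }
 intros N delta a b HN Hd Hh Hz.
 assert (HN0 : (0 < N)%nat) by lia.
 assert (Hblk : forall m, rsum N (fun j => xfour N (am N a m) (am N b m) j ^ 4) <= INR N * (8 * C1 ^ 4 * delta ^ 4 * P ^ 4 * q ^ m)).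
 { intros m. set (Bm := C1 * delta * P ^ S m / 2 ^ m).
   assert (HB : 0 <= Bm) by (unfold Bm; unfold Rdiv; apply Rmult_le_pos; [apply Rmult_le_pos; [apply Rmult_le_pos|]; try lra; apply pow_le; lra| left; apply Rinv_0_lt_compat, pow_lt; lra]).
   assert (Hz' : forall k, (k < N)%nat -> cnd N m k = true -> cmod (a k) (b k) <= Bm).
   { intros k Hk Hc. apply cnd_spec in Hc. destruct Hc as [Hk1 Hk2]. unfold Bm, C1.
     apply (z_bound mu alpha N k delta m); auto; try lra. }
   destruct (blk_bounds N a b m Bm HN0 Hh HB Hz') as [Hs H2].
   eapply Rle_trans. apply (sum4_le _ _ (2 * 2 ^ m * Bm)). intros; apply Hs.
   eapply Rle_trans. apply Rmult_le_compat_l. apply pow2_ge_0. apply H2.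
   unfold q. rewrite <- blk_id. fold Bm. right; ring. }
 rewrite (rsum_ext _ _ (fun j => (rsum N (fun m => xfour N (am N a m) (am N b m) j)) ^ 4)) by (intros; rewrite decomp; auto).
 eapply Rle_trans. apply rsum_le. intros j _. apply (combine_pt N _ rho Hrho).
 rewrite rsum_scal, rsum_swap.
 apply Rle_trans with ((/ (1 - rho)) ^ 3 * rsum N (fun m => (INR N * (8 * C1 ^ 4 * delta ^ 4 * P ^ 4)) * r ^ m)).
 - apply Rmult_le_compat_l; [apply pow_le; lra|]. apply rsum_le. intros m _.
   rewrite rsum_scal. unfold r. rewrite <- pow_q by lra.
   assert (0 <= (/ rho ^ m) ^ 3) by (apply pow_le; left; apply Rinv_0_lt_compat, pow_lt; lra).
   eapply Rle_trans. apply Rmult_le_compat_l; [exact H| apply Hblk]. right; ring.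
 - rewrite rsum_scal. assert (Hg := rsum_geom_le N r Hr).
   assert (0 <= INR N * (8 * C1 ^ 4 * delta ^ 4 * P ^ 4)).
   { apply Rmult_le_pos; [apply pos_INR|]. assert (0 <= delta ^ 4) by (apply pow_le; lra).
     replace (8 * C1 ^ 4 * delta ^ 4 * P ^ 4) with ((8 * C1 ^ 4 * P ^ 4) * delta ^ 4) by ring. apply Rmult_le_pos; auto. }
   assert (0 <= (/ (1 - rho)) ^ 3) by (apply pow_le; lra).
   apply Rle_trans with ((/ (1 - rho)) ^ 3 * (INR N * (8 * C1 ^ 4 * delta ^ 4 * P ^ 4) * / (1 - r))).
   + apply Rmult_le_compat_l; auto. apply Rmult_le_compat_l; auto.
   + right; ring. Qed.

Lemma pt_bound A t d : Rabs A <= 1 -> 0 < d -> Rabs (A * t ^ 3 + / 4 * t ^ 4) <= t ^ 4 * (/ d + / 4) + d ^ 3.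
Proof. intros HA Hd. set (u := Rabs t). assert (Hu : 0 <= u) by apply Rabs_pos.
 assert (E4 : t ^ 4 = u ^ 4) by (unfold u; rewrite RPow_abs; symmetry; apply Rabs_pos_eq; replace (t ^ 4) with ((t ^ 2) ^ 2) by ring; apply pow2_ge_0).
 assert (E3 : Rabs (t ^ 3) = u ^ 3) by (unfold u; rewrite <- RPow_abs; auto).
 assert (H3 : u ^ 3 <= u ^ 4 / d + d ^ 3).
 { destruct (Rle_lt_dec u d).
   - assert (u ^ 3 <= d ^ 3) by (apply pow_incr; lra). assert (0 <= u ^ 4 / d) by (unfold Rdiv; apply Rmult_le_pos; [apply pow_le; lra| left; apply Rinv_0_lt_compat; lra]). lra.
   - assert (u ^ 3 * d <= u ^ 4) by (replace (u ^ 4) with (u ^ 3 * u) by ring; apply Rmult_le_compat_l; [apply pow_le|]; lra).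
     assert (u ^ 3 <= u ^ 4 / d) by (apply (Rmult_le_reg_r d); auto; unfold Rdiv; rewrite Rmult_assoc, Rinv_l; lra).
     assert (0 < d ^ 3) by (apply pow_lt; lra). lra. }
 eapply Rle_trans. apply Rabs_triang. rewrite !Rabs_mult.
 assert (Rabs A * Rabs (t ^ 3) <= u ^ 3) by (rewrite E3; assert (0 <= u ^ 3) by (apply pow_le; auto); nra).
 rewrite (Rabs_pos_eq (t ^ 4)) by (rewrite E4; apply pow_le; auto).
 rewrite (Rabs_pos_eq (/ 4)) by lra. rewrite E4 in *. unfold Rdiv in H3. lra. Qed.

Theorem lemma4p8 (mu rho alpha : R) :
  1 < mu -> 0 < rho < 1 -> 0 < alpha < / 4 ->
  exists A5 delta0 : R, 0 < delta0 /\
    forall (N : nat) (delta : R) (a b : nat -> R),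
      (3 <= N)%nat ->
      0 < delta < delta0 ->
      in_hatR N a b ->
      -1 + rho < a O < 1 - rho ->
      (forall k : nat, (1 <= k <= N - 1)%nat ->
         cmod (a k) (b k) <=
           delta * r_kN alpha k N / sqrt (lambda (mu * gamma1 N) k N)) ->
      Rabs (Gtilde N (mu * gamma1 N) a b
            - (- / 2 * a O ^ 2 + / 4 * a O ^ 4
               + / 2 * rsum N (fun k => if Nat.eqb k 0 then 0
                     else lambda (mu * gamma1 N) k N * cmod (a k) (b k) ^ 2)
               + 3 / 2 * a O ^ 2 * rsum N (fun k => if Nat.eqb k 0 then 0
                     else cmod (a k) (b k) ^ 2)))
      <= A5 * delta ^ 3.
Proof. intros Hmu Hrho Hal. destruct (E4_bound mu alpha Hmu Hal) as [K4 [HK4 HE]].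
 exists (5 / 4 * K4 + 1), 1. split; [lra|]. intros N delta a b HN Hd Hh Ha0 Hz.
 assert (HN0 : (0 < N)%nat) by lia. assert (HNr : 0 < INR N) by (apply lt_0_INR; lia).
 rewrite (main_identity N (mu * gamma1 N) a b HN0 Hh).
 set (y := xfour N (a0f a) b).
 assert (HS := HE N delta a b HN ltac:(lra) Hh Hz). fold y in HS.
 assert (HA : Rabs (a O) <= 1) by (apply Rabs_le; lra).
 rewrite Rabs_mult, Rabs_pos_eq by (left; apply Rinv_0_lt_compat; lra).
 assert (H1 : Rabs (rsum N (fun j => a O * y j ^ 3 + / 4 * y j ^ 4)) <= (/ delta + / 4) * (INR N * K4 * delta ^ 4) + INR N * delta ^ 3).
 { eapply Rle_trans. apply rsum_abs.
   eapply Rle_trans. apply rsum_le. intros j _. apply (pt_bound (a O) (y j) delta HA ltac:(lra)).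
   rewrite rsum_plus, rsum_const. rewrite (rsum_ext _ _ (fun j => (/ delta + / 4) * y j ^ 4)) by (intros; ring).
   rewrite rsum_scal. assert (0 < / delta + / 4) by (assert (0 < / delta) by (apply Rinv_0_lt_compat; lra); lra).
   assert ((/ delta + / 4) * rsum N (fun j => y j ^ 4) <= (/ delta + / 4) * (INR N * K4 * delta ^ 4)) by (apply Rmult_le_compat_l; lra).
   lra. }
 apply Rle_trans with (/ INR N * ((/ delta + / 4) * (INR N * K4 * delta ^ 4) + INR N * delta ^ 3)).
 - apply Rmult_le_compat_l; auto. left; apply Rinv_0_lt_compat; lra.
 - replace (/ INR N * ((/ delta + / 4) * (INR N * K4 * delta ^ 4) + INR N * delta ^ 3))
     with (K4 * delta ^ 3 + / 4 * K4 * delta ^ 3 * delta + delta ^ 3) by (field; lra).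
   assert (0 < delta ^ 3) by (apply pow_lt; lra).
   assert (K4 * delta ^ 3 * delta <= K4 * delta ^ 3) by (assert (0 <= K4 * delta ^ 3) by nra; nra).
   lra. Qed.
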